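(* Let $D\ge1$ and $0\le d\le D$. Let $G=G_1\,\Box\,\cdots\,\Box\,G_D$ be a cartesian product in which exactly $d$ factors are cycle digraphs $C_{n_\mu}$ with $n_\mu$ even, and the remaining $D-d$ factors are simple directed paths $P_{n_\mu}$ with $n_\mu$ odd. Then $$|V|\cdot r-\operatorname{rank}\mathcal D(G)=r\cdot\prod_{\mu=1}^D\big(\beta_0(G_\mu)+\beta_1(G_\mu)\big)=r\cdot 2^d,$$ where $|V|=\prod_\mu n_\mu$. Equivalently, $\dim\ker\mathcal D(G)/r=2^d$.
   Context: The cycle digraph $C_n$ ($n\ge3$) has vertex set $\{1,\dots,n\}$ and edges $i\to i+1$ for $1\le i\le n-1$ together with $n\to1$. The simple directed path $P_n$ ($n\ge2$) has vertex set $\{1,\dots,n\}$ and edges $i\to i+1$ for $1\le i\le n-1$. For a directed graph without multiple edges, the anti-symmetrized adjacency matrix $A_{\mathrm{as}}$ is the $|V|\times|V|$ matrix with: - $(A_{\mathrm{as}})_{ij}=1$ if an edge leaves $i$ and enters $j$; - $(A_{\mathrm{as}})_{ij}=-1$ if an edge leaves $j$ and enters $i$; - $(A_{\mathrm{as}})_{ij}=0$ otherwise. Let $\gamma_1,\dots,\gamma_D$ be complex $r\times r$ matrices satisfying $\gamma_\mu\gamma_\nu+\gamma_\nu\gamma_\mu=2\delta_{\mu\nu}\mathbf 1_r$. In particular each $\gamma_\mu$ is invertible, and $r=\operatorname{rank}\gamma$. For $G=G_1\Box\cdots\Box G_D$ with $G_\mu$ having $n_\mu$ vertices, define the $(r\prod_\mu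 n_\mu)$-square matrix $$\mathcal D(G)=\sum_{\mu=1}^D\Big(\mathbf 1_{n_D}\otimes\cdots\otimes\mathbf 1_{n_{\mu+1}}\otimes A_{\mathrm{as}}(G_\mu)\otimes\mathbf 1_{n_{\mu-1}}\otimes\cdots\otimes\mathbf 1_{n_1}\Big)\otimes\gamma_\mu,$$ where $\otimes$ is the Kronecker product and $\mathbf 1_k$ is the $k\times k$ identity. Betti numbers of a factor graph: $\beta_0$ is the number of connected components and $\beta_1=|E|-|V|+\beta_0$. Thus $\beta_0+\beta_1$ equals $2$ for a cycle and $1$ for a path. *)

(* Defs.v *)
From HB Require Import structures.
From mathcomp Require Import all_boot all_order all_algebra.
From mathcomp.real_closed Require Import complex.
Set Implicit Arguments. Unset Strict Implicit. Unset Printing Implicit Defensive.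
Import Order.TTheory GRing.Theory Num.Theory.
Local Open Scope ring_scope.

(* Digraphs on the vertex set 'I_n = {0,..,n-1} (0-based relabelling of {1,..,n}),
   given by their (boolean) edge relation. *)

Definition cycle_edge (n : nat) : rel 'I_n := fun i j => (j == (i.+1 %% n)%N :> nat).
Definition path_edge (n : nat) : rel 'I_n := fun i j => (j == i.+1 :> nat).

Definition factor_edge (cyc : bool) (n : nat) : rel 'I_n :=
  if cyc then @cycle_edge n else @path_edge n.
Arguments factor_edge : clear implicits.

Definition Aas (C : nzRingType) (n : nat) (e : rel 'I_n) : 'M[C]_n :=
  \matrix_(i, j) (if e i j then 1 else if e j i then -1 else 0).

Definition num_edges (n : nat) (e : rel 'I_n) : nat := #|[set p : 'I_n * 'I_n | e p.1 p.2]|.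
Definition beta0 (n : nat) (e : rel 'I_n) : nat :=
  n_comp (fun x y => e x y || e y x) 'I_n.
Definition beta1 (n : nat) (e : rel 'I_n) : nat :=
  (num_edges e + beta0 e - n)%N.

Definition vert (D : nat) (n : 'I_D -> nat) := {dffun forall mu : 'I_D, 'I_(n mu)}.

(* Entry ((v,s),(w,t)) of
   D(G) = sum_mu (1 (x) ... (x) Aas(G_mu) (x) ... (x) 1) (x) gamma_mu,
   i.e. the literal entrywise unfolding of the Kronecker products. *)
Definition DG_entry (C : nzRingType) (D : nat) (n : 'I_D -> nat) (cyc : 'I_D -> bool)
  (r : nat) (gam : 'I_D -> 'M[C]_r) (x y : vert n * 'I_r) : C :=
  \sum_(mu < D)
    (if [forall nu : 'I_D, (nu != mu) ==> (val (x.1 nu) == val (y.1 nu))]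
     then @Aas C (n mu) (factor_edge (cyc mu) (n mu)) (x.1 mu) (y.1 mu) * gam mu x.2 y.2
     else 0).

(* The matrix D(G), indexed by an enumeration of V x 'I_r (the rank does not
   depend on the chosen ordering of the basis). *)
Definition DG (C : nzRingType) (D : nat) (n : 'I_D -> nat) (cyc : 'I_D -> bool)
  (r : nat) (gam : 'I_D -> 'M[C]_r) : 'M[C]_(#|{: vert n * 'I_r}|) :=
  \matrix_(i, j) DG_entry cyc gam (enum_val i) (enum_val j).

(* Main.v *)
Require Import Defs.
From HB Require Import structures.
From mathcomp Require Import all_boot all_order all_algebra zify.
From mathcomp.real_closed Require Import complex.
Unset Printing Implicit Defensive.
Import Order.TTheory GRing.Theory Num.Theory.
Local Open Scope ring_scope.

Lemma sum_pick (C : nzRingType) m (g : nat -> C) a :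
  \sum_(k < m) (if (k : nat) == a then g k else 0) = if (a < m)%N then g a else 0.
Proof.
case: ltnP => h.
  rewrite (bigD1 (Ordinal h)) //= eqxx big1 ?addr0 // => k /negbTE.
  by rewrite -val_eqE /= => ->.
by rewrite big1 // => k _; have := ltn_ord k; case: eqP => // ->; rewrite ltnNge h.
Qed.

Lemma sum1_ordn m : (\sum_(i < m) 1 = m)%N.
Proof. by rewrite big_const_ord iter_addn_0 mul1n. Qed.
Lemma sum_pathn m : (\sum_(i < m) ((i.+1 < m)%N : nat) = m.-1)%N.
Proof.
case: m => [|m]; first by rewrite big_ord0.
rewrite big_ord_recr /= ltnn addn0.
rewrite -[RHS]sum1_ordn; apply: eq_bigr => i _.
by rewrite ltnS ltn_ord.
Qed.
Lemma sum_pickn m a : (\sum_(k < m) (((k : nat) == a) : nat) = (a < m))%N.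
Proof.
case: ltnP => h.
  rewrite (bigD1 (Ordinal h)) //= eqxx big1 ?addn0 // => k /negbTE.
  by rewrite -val_eqE /= => ->.
by rewrite big1 // => k _; have := ltn_ord k; case: eqP => // ->; rewrite ltnNge h.
Qed.
Lemma cardT_test (D : nat) (n : 'I_D -> nat) r : #|{: vert n * 'I_r}| = ((\prod_(mu < D) n mu) * r)%N.
Proof.
rewrite card_prod card_ord /vert card_dep_ffun foldrE big_map big_enum /=.
by congr (_ * _)%N; apply: eq_bigr => mu _; rewrite card_ord.
Qed.
Lemma cardB (D : nat) (cyc : 'I_D -> bool) : #|[set b : {ffun 'I_D -> bool} | [forall mu, b mu ==> cyc mu]]| = (2 ^ #|[set mu | cyc mu]|)%N.
Proof.
rewrite -card_bool -(card_pffun_on false [set mu | cyc mu] (predT : pred bool)).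
rewrite cardsE; apply: eq_card => b; rewrite inE.
apply/forallP/pffun_onP => [h|[hs _] mu].
  split; last by move=> x _.
  by apply/subsetP => mu; rewrite !inE; have := h mu; case: (b mu).
apply/implyP => hb; have := subsetP hs mu; rewrite !inE hb; exact.
Qed.
Lemma prodif (D : nat) (cyc : 'I_D -> bool) : (\prod_(mu < D) (if cyc mu then 2 else 1) = 2 ^ #|[set mu | cyc mu]|)%N.
Proof. by rewrite -big_mkcond /= prod_nat_const cardsE. Qed.

Section Main.
Variables (C : numClosedFieldType) (D : nat) (n : 'I_D -> nat) (cyc : 'I_D -> bool)
  (r : nat) (gam : 'I_D -> 'M[C]_r).
Hypothesis Hcyc : forall mu, cyc mu -> (3 <= n mu)%N /\ ~~ odd (n mu).
Hypothesis Hpath : forall mu, ~~ cyc mu -> (2 <= n mu)%N /\ odd (n mu).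

Lemma n_ge2 mu : (2 <= n mu)%N.
Proof. case: (boolP (cyc mu)) => h; [have [] := Hcyc mu h | have [] := Hpath mu h]; lia. Qed.

Definition sc mu (m : nat) : nat := if cyc mu then (m.+1 %% n mu)%N else m.+1.

Lemma edgeE mu (i j : 'I_(n mu)) :
  factor_edge (cyc mu) (n mu) i j = ((j : nat) == sc mu i).
Proof. by rewrite /factor_edge /sc; case: (cyc mu). Qed.

Definition Aloc mu (i j : 'I_(n mu)) : C := @Aas C (n mu) (factor_edge (cyc mu) (n mu)) i j.

Lemma AlocE mu i j : Aloc mu i j =
  (if (j : nat) == sc mu i then 1 else if (i : nat) == sc mu j then -1 else 0).
Proof. by rewrite /Aloc /Aas mxE !edgeE. Qed.

Lemma modS_case m k : (k < m)%N -> (k.+1 %% m = if (k.+1 < m)%N then k.+1 else 0)%N.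
Proof.
move=> h; case: ltnP => h2; first by rewrite modn_small.
have -> : k.+1 = m by lia.
by rewrite modnn.
Qed.

Lemma no_both mu (i j : 'I_(n mu)) : (j : nat) == sc mu i -> (i : nat) == sc mu j -> False.
Proof.
rewrite /sc; case: (boolP (cyc mu)) => hc; last by move=> /= /eqP e1 /eqP e2; lia.
have [h3 _] := Hcyc mu hc.
have hi := ltn_ord i; have hj := ltn_ord j.
rewrite /= !modS_case //.
case: ltnP => h1; case: ltnP => h2; move=> /eqP e1 /eqP e2; lia.
Qed.

Lemma AlocE2 mu i j : Aloc mu i j =
  (if (j : nat) == sc mu i then 1 else 0) - (if (i : nat) == sc mu j then 1 else 0).
Proof.
rewrite AlocE; case: eqP => h1; case: eqP => h2 //; rewrite ?subr0 ?sub0r //.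
by exfalso; apply: (@no_both mu i j); apply/eqP.
Qed.

Lemma locC mu (g : nat -> C) (j : 'I_(n mu)) : cyc mu ->
  \sum_(k : 'I_(n mu)) g k * Aloc mu k j =
  g (if (0 < j)%N then j.-1 else (n mu).-1) - g (if (j.+1 < n mu)%N then j.+1 else 0%N).
Proof.
move=> hc; have [h3 _] := Hcyc mu hc; have hj := ltn_ord j.
transitivity (\sum_(k : 'I_(n mu)) ((if (k:nat) == (if (0 < j)%N then j.-1 else (n mu).-1)
     then g k else 0) - (if (k:nat) == (if (j.+1 < n mu)%N then j.+1 else 0%N) then g k else 0))).
  apply: eq_bigr => k _; rewrite AlocE2 /sc hc mulrBr.
  have hk := ltn_ord k.
  rewrite !modS_case //.
  have -> : ((j:nat) == (if (k.+1 < n mu)%N then k.+1 else 0%N)) =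
     ((k:nat) == (if (0 < j)%N then j.-1 else (n mu).-1)).
    by apply/eqP/eqP; case: ifP => ?; case: ifP => ? => ?; lia.
  by congr (_ - _); case: ifP; rewrite ?mulr1 ?mulr0.
rewrite sumrB !sum_pick.
have -> : ((if (0 < j)%N then j.-1 else (n mu).-1) < n mu)%N by case: ifP; lia.
by have -> : ((if (j.+1 < n mu)%N then j.+1 else 0%N) < n mu)%N by case: ifP; lia.
Qed.

Lemma locP mu (g : nat -> C) (j : 'I_(n mu)) : ~~ cyc mu ->
  \sum_(k : 'I_(n mu)) g k * Aloc mu k j =
  (if (0 < j)%N then g j.-1 else 0) - (if (j.+1 < n mu)%N then g j.+1 else 0).
Proof.
move=> hc; have hj := ltn_ord j.
transitivity (\sum_(k : 'I_(n mu)) ((if (k:nat) == j.-1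
     then (if (0 < j)%N then g k else 0) else 0) - (if (k:nat) == j.+1 then g k else 0))).
  apply: eq_bigr => k _; rewrite AlocE2 /sc (negbTE hc) mulrBr.
  congr (_ - _); last by case: ifP; rewrite ?mulr1 ?mulr0.
  by case: (ltnP 0 j) => hj0; case: eqP => e1; case: eqP => e2; rewrite ?mulr1 ?mulr0 //; lia.
rewrite sumrB (sum_pick _ _ (fun k => if (0 < j)%N then g k else 0)) sum_pick.
have -> : (j.-1 < n mu)%N by lia.
by [].
Qed.


Local Notation T := (vert n * 'I_r)%type.

Definition upd (v : vert n) (mu : 'I_D) (m : nat) : vert n :=
  finfun (fun nu => if nu == mu then insubd (v nu) m else v nu).

Lemma updE v mu m nu : (upd v mu m nu : nat) =
  if nu == mu then (if (m < n mu)%N then m else v mu) else v nu.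
Proof. by rewrite /upd ffunE; case: eqP => [->|] //; rewrite val_insubd. Qed.

Lemma updEmu v mu m : (upd v mu m mu : nat) = if (m < n mu)%N then m else v mu.
Proof. by rewrite updE eqxx. Qed.

Lemma upd_id v mu : upd v mu (v mu) = v.
Proof.
apply/ffunP => nu; apply: val_inj; rewrite /= updE.
by case: eqP => // ->; rewrite ltn_ord.
Qed.

Lemma upd_upd v mu m m' : (m' < n mu)%N -> upd (upd v mu m) mu m' = upd v mu m'.
Proof.
move=> h; apply/ffunP => nu; apply: val_inj; rewrite /= !updE.
by case: eqP => //; rewrite h.
Qed.

Definition agree mu (v w : vert n) : bool :=
  [forall nu, (nu != mu) ==> (val (v nu) == val (w nu))].

Definition Afun mu (x y : T) : C :=
  if agree mu x.1 y.1 && (x.2 == y.2) then Aloc mu (x.1 mu) (y.1 mu) else 0.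

Lemma sumA (f : T -> C) mu (y : T) :
  \sum_x f x * Afun mu x y =
  \sum_(k : 'I_(n mu)) f (upd y.1 mu k, y.2) * Aloc mu k (y.1 mu).
Proof.
rewrite (partition_big (fun x : T => x.1 mu) predT) //=.
apply: eq_bigr => k _.
have hk : upd y.1 mu k mu = k by apply: val_inj; rewrite /= updEmu ltn_ord.
rewrite (bigD1 (upd y.1 mu k, y.2)) /=; last by rewrite hk eqxx.
rewrite big1 ?addr0.
  rewrite /Afun /= eqxx andbT.
  have -> : agree mu (upd y.1 mu k) y.1.
    by apply/forallP => nu; apply/implyP => /negbTE h; rewrite /= updE h.
  by rewrite hk.
move=> [v s] /= /andP [/eqP hv hne]; rewrite /Afun /=.
case: ifP; last by rewrite mulr0.
move=> /andP [ha /eqP h2]; exfalso; move/eqP: hne; apply.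
congr pair => //.
apply/ffunP => nu; apply: val_inj; rewrite /= updE; case: eqP => [->|/eqP hn].
  by rewrite ltn_ord hv.
by move/forallP: ha => /(_ nu); rewrite hn => /eqP.
Qed.

Definition par (v : vert n) : {ffun 'I_D -> bool} := [ffun mu => odd (v mu)].
Lemma parE v mu : par v mu = odd (v mu).
Proof. by rewrite ffunE. Qed.

Definition valid (x : T) : bool := [forall mu, cyc mu || ~~ par x.1 mu].

Lemma n_gt0 mu : (0 < n mu)%N.
Proof. by apply: ltnW; apply: n_ge2. Qed.

Definition ord0' mu : 'I_(n mu) := Ordinal (n_gt0 mu).
Definition repb (b : {ffun 'I_D -> bool}) : vert n :=
  finfun (fun mu => insubd (ord0' mu) (b mu : nat)).
Definition rep' (a : {ffun 'I_D -> bool} * 'I_r) : T := (repb a.1, a.2).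
Definition cls (x : T) : {ffun 'I_D -> bool} * 'I_r := (par x.1, x.2).
Definition rep (x : T) : T := rep' (cls x).

Lemma repbE b mu : (repb b mu : nat) = b mu.
Proof.
rewrite /repb ffunE val_insubd; have := n_ge2 mu.
by case: (b mu) => /= h; rewrite ?ifT //; lia.
Qed.

Lemma par_repb b : par (repb b) = b.
Proof. by apply/ffunP => mu; rewrite parE repbE; case: (b mu). Qed.

Lemma msr_upd (v : vert n) (mu : 'I_D) m : (m < v mu)%N ->
  (\sum_nu (upd v mu m nu : nat) < \sum_nu (v nu : nat))%N.
Proof.
move=> h.
rewrite (bigD1 mu) // [X in (_ < X)%N](bigD1 mu) //= updEmu.
have -> : (m < n mu)%N by apply: ltn_trans h (ltn_ord _).
have -> : \sum_(i < D | i != mu) (upd v mu m i : nat) = \sum_(i < D | i != mu) (v i : nat).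
  by apply: eq_bigr => i /negbTE hi; rewrite updE hi.
by rewrite ltn_add2r.
Qed.

Lemma par_upd (v : vert n) (mu : 'I_D) m : (m < n mu)%N -> odd m = odd (v mu) -> par (upd v mu m) = par v.
Proof.
move=> h1 h2; apply/ffunP => nu; rewrite !parE updE.
by case: eqP => [->|//]; rewrite h1.
Qed.

Lemma par_upd2 (v : vert n) (mu : 'I_D) m m' : (m < n mu)%N -> (m' < n mu)%N -> odd m = odd m' ->
  par (upd v mu m) = par (upd v mu m').
Proof.
move=> h1 h2 h3; apply/ffunP => nu; rewrite !parE !updE.
by case: eqP => // _; rewrite h1 h2.
Qed.

Lemma odd_eq a b : (a %% 2 = b %% 2)%N -> odd a = odd b.
Proof. by rewrite !modn2; case: (odd a); case: (odd b). Qed.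

Section Kernel.
Variable f : T -> C.
Hypothesis hf : forall mu y, \sum_x f x * Afun mu x y = 0.

Lemma kerS1 (x : T) mu : (2 <= x.1 mu)%N -> f x = f (upd x.1 mu (x.1 mu - 2), x.2).
Proof.
move=> h2.
have hx := ltn_ord (x.1 mu).
set j := (x.1 mu).-1.
have hjn : (j < n mu)%N by rewrite /j; lia.
have := hf mu (upd x.1 mu j, x.2); rewrite sumA /=.
under eq_bigr => k _ do rewrite upd_upd ?ltn_ord //.
have hj : (upd x.1 mu j mu : nat) = j by rewrite updEmu hjn.
set g := fun m : nat => f (upd x.1 mu m, x.2).
have gx : g (x.1 mu) = f x by rewrite /g upd_id; case: x {hx j hjn hj g h2}.
case: (boolP (cyc mu)) => hc.
  rewrite (locC _ g) // hj.
  have -> : (0 < j)%N by rewrite /j; lia.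
  have -> : (j.+1 < n mu)%N by rewrite /j; lia.
  move/eqP; rewrite subr_eq0 => /eqP.
  have -> : j.+1 = x.1 mu by rewrite /j; lia.
  by rewrite gx /g => <-; congr f; congr pair; congr upd; rewrite /j; lia.
rewrite (locP _ g) // hj.
have -> : (0 < j)%N by rewrite /j; lia.
have -> : (j.+1 < n mu)%N by rewrite /j; lia.
move/eqP; rewrite subr_eq0 => /eqP.
have -> : j.+1 = x.1 mu by rewrite /j; lia.
by rewrite gx /g => <-; congr f; congr pair; congr upd; rewrite /j; lia.
Qed.

Lemma kerS2 (x : T) mu : ~~ cyc mu -> (x.1 mu : nat) = 1%N -> f x = 0.
Proof.
move=> hc h1.
have := hf mu (upd x.1 mu 0, x.2); rewrite sumA /=.
under eq_bigr => k _ do rewrite upd_upd ?ltn_ord //.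
have hj : (upd x.1 mu 0 mu : nat) = 0%N by rewrite updEmu n_gt0.
rewrite (locP _ (fun m : nat => f (upd x.1 mu m, x.2))) // hj /=.
have -> : (1 < n mu)%N by apply: n_ge2.
rewrite sub0r => /eqP; rewrite oppr_eq0 => /eqP.
by rewrite -h1 upd_id; case: x {h1 hj}.
Qed.

Lemma ker_char (x : T) : f x = if valid x then f (rep x) else 0.
Proof.
have [k] := ubnP (\sum_nu (x.1 nu : nat)); elim: k x => // k IH x hk.
case: (pickP (fun mu => (2 <= x.1 mu)%N)) => [mu h2 | hall].
  rewrite (kerS1 x mu h2).
  have hp : par (upd x.1 mu (x.1 mu - 2)) = par x.1.
    apply: par_upd; first by have := ltn_ord (x.1 mu); lia.
    by apply: odd_eq; lia.
  have -> : valid x = valid (upd x.1 mu (x.1 mu - 2), x.2) by rewrite /valid /= hp.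
  have -> : rep x = rep (upd x.1 mu (x.1 mu - 2), x.2) by rewrite /rep /cls /= hp.
  apply: IH => /=.
  have h : (x.1 mu - 2 < x.1 mu)%N by lia.
  by apply: leq_trans (msr_upd x.1 mu _ h) _; rewrite -ltnS.
case: (boolP (valid x)) => hv.
  congr f; case: x {IH hk} hall hv => v s hall hv.
  rewrite /rep /rep' /cls /=; congr pair.
  apply/ffunP => mu; apply: val_inj; rewrite /= repbE ffunE.
  by have := hall mu; case: (v mu) => [[|[|m]] ?] //=.
move/forallPn: hv => [mu]; rewrite negb_or negbK => /andP [hc hp].
apply: (kerS2 x mu hc).
move: hp; rewrite ffunE; have := hall mu; case: (x.1 mu) => [[|[|m]] ?] //=.
Qed.

End Kernel.

Definition e (a : {ffun 'I_D -> bool} * 'I_r) (x : T) : C :=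
  if valid x && (cls x == a) then 1 else 0.

Lemma E_ker a mu (y : T) : \sum_x e a x * Afun mu x y = 0.
Proof.
rewrite sumA.
set g := fun m : nat => e a (upd y.1 mu m, y.2).
have hg1 : forall m m', (m < n mu)%N -> (m' < n mu)%N -> odd m = odd m' -> g m = g m'.
  by move=> m m' h1 h2 h3; rewrite /g /e /valid /cls /= (par_upd2 y.1 mu _ _ h1 h2 h3).
have hg2 : forall m, ~~ cyc mu -> (m < n mu)%N -> odd m -> g m = 0.
  move=> m hc h1 h2; rewrite /g /e; case: ifP => // /andP [hv _].
  by move/forallP: hv => /(_ mu); rewrite (negbTE hc) /= ffunE updEmu h1 h2.
have hj := ltn_ord (y.1 mu).
case: (boolP (cyc mu)) => hc.
  have [h3 hev] := Hcyc mu hc.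
  have hn2 : (n mu %% 2 = 0)%N by rewrite modn2 (negbTE hev).
  rewrite (locC _ g) //; apply/eqP; rewrite subr_eq0; apply/eqP; apply: hg1.
  - by case: ifP; lia.
  - by case: ifP; lia.
  by apply: odd_eq; case: ifP => ?; case: ifP => ?; lia.
have [h2 hod] := Hpath mu hc.
have hn2 : (n mu %% 2 = 1)%N by rewrite modn2 hod.
rewrite (locP _ g) //.
case: (ltnP 0 (y.1 mu)) => h0; case: ltnP => h1.
- by apply/eqP; rewrite subr_eq0; apply/eqP; apply: hg1; try lia; apply: odd_eq; lia.
- rewrite subr0; apply: hg2 => //; first lia.
  by rewrite (odd_eq _ 1) //; lia.
- rewrite sub0r; apply/eqP; rewrite oppr_eq0; apply/eqP; apply: hg2 => //.
  have -> : (y.1 mu).+1 = 1%N by lia.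
  by [].
- lia.
Qed.

Definition Gl (g : 'M[C]_r) (x y : T) : C := if x.1 == y.1 then g x.2 y.2 else 0.

Definition toM (f : T -> T -> C) : 'M[C]_(#|{: T}|) :=
  \matrix_(i, j) f (enum_val i) (enum_val j).

Lemma sumT (F : T -> C) : \sum_(i < #|{: T}|) F (enum_val i) = \sum_x F x.
Proof. by rewrite -(big_enum_val (A := predT)). Qed.

Lemma toM_mul f g : toM f *m toM g = toM (fun x y => \sum_z f x z * g z y).
Proof.
apply/matrixP => i j; rewrite !mxE -sumT.
by apply: eq_bigr => k _; rewrite !mxE.
Qed.

Lemma toM_sum (I : finType) (F : I -> T -> T -> C) :
  \sum_i toM (F i) = toM (fun x y => \sum_i F i x y).
Proof. by apply/matrixP => a b; rewrite summxE !mxE; apply: eq_bigr => i _; rewrite mxE. Qed.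

Lemma AG mu g x y : \sum_z Afun mu x z * Gl g z y =
  if agree mu x.1 y.1 then Aloc mu (x.1 mu) (y.1 mu) * g x.2 y.2 else 0.
Proof.
rewrite (bigD1 (y.1, x.2)) //= big1 ?addr0.
  by rewrite /Afun /Gl /= !eqxx andbT; case: ifP; rewrite ?mul0r.
move=> [v t] /= hne; move: hne; rewrite /Afun /Gl /=.
case: (v =P y.1) => [->|]; last by rewrite mulr0.
case: (x.2 =P t) => [<-|]; first by rewrite eqxx.
by rewrite andbF mul0r.
Qed.

Lemma GA mu g x y : \sum_z Gl g x z * Afun mu z y =
  if agree mu x.1 y.1 then Aloc mu (x.1 mu) (y.1 mu) * g x.2 y.2 else 0.
Proof.
rewrite (bigD1 (x.1, y.2)) //= big1 ?addr0.
  by rewrite /Afun /Gl /= !eqxx andbT; case: ifP; rewrite ?mulr0 // mulrC.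
move=> [v t] /= hne; move: hne; rewrite /Afun /Gl /=.
case: (x.1 =P v) => [<-|]; last by rewrite mul0r.
case: (t =P y.2) => [->|]; first by rewrite eqxx.
by rewrite andbF mulr0.
Qed.

Lemma GG g h x y : \sum_z Gl g x z * Gl h z y = Gl (g *m h) x y.
Proof.
transitivity (\sum_(v : vert n) \sum_(t : 'I_r) Gl g x (v, t) * Gl h (v, t) y).
  by rewrite pair_big; apply: eq_bigr => [[v t]] _.
rewrite (bigD1 x.1) //= [X in _ + X]big1 ?addr0.
  rewrite /Gl /= eqxx; case: ifP => _; last by rewrite big1 // => t _; rewrite mulr0.
  by rewrite mxE.
by move=> v hv; apply: big1 => t _; rewrite /Gl /= eq_sym (negbTE hv) mul0r.
Qed.

Lemma AA mu nu x y : mu != nu -> \sum_z Afun mu x z * Afun nu z y =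
  if (x.2 == y.2) && [forall k, ((k != mu) && (k != nu)) ==> (val (x.1 k) == val (y.1 k))]
  then Aloc mu (x.1 mu) (y.1 mu) * Aloc nu (x.1 nu) (y.1 nu) else 0.
Proof.
move=> hmn.
pose mix : vert n := finfun (fun k => if k == mu then y.1 k else x.1 k).
have mixE k : mix k = if k == mu then y.1 k else x.1 k by rewrite ffunE.
have hm1 : agree mu x.1 mix.
  by apply/forallP => k; apply/implyP => /negbTE hk; rewrite mixE hk.
have hm2 : agree nu mix y.1 =
    [forall k, ((k != mu) && (k != nu)) ==> (val (x.1 k) == val (y.1 k))].
  apply/forallP/forallP => h k; have := h k; rewrite mixE.
    by case: (k =P mu).
  by case: (k =P mu) => [->|_] //=; rewrite eqxx implybT.
have hmu : mix mu = y.1 mu by rewrite mixE eqxx.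
have hnu : mix nu = x.1 nu by rewrite mixE eq_sym (negbTE hmn).
rewrite (bigD1 (mix, x.2)) //= big1 ?addr0.
  rewrite /Afun /= hm1 eqxx hm2 hmu hnu /=.
  by rewrite andbC; case: ifP => _; rewrite ?mulr0.
move=> [v t] /= hne; rewrite /Afun /=.
case: ifP => [/andP [a1 /eqP e1]|]; last by rewrite mul0r.
case: ifP => [/andP [a2 _]|]; last by rewrite mulr0.
exfalso; move/eqP: hne; apply; congr pair => //.
apply/ffunP => k; apply: val_inj; rewrite mixE; case: eqP => [->|/eqP hk].
  by move/forallP: a2 => /(_ mu); rewrite hmn => /eqP.
by move/forallP: a1 => /(_ k); rewrite hk => /eqP.
Qed.

Definition At mu := toM (Afun mu).
Definition Gt g := toM (Gl g).

Lemma DG_decomp : DG n cyc gam = \sum_mu At mu *m Gt (gam mu).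
Proof.
rewrite /At /Gt (eq_bigr _ (fun mu _ => toM_mul _ _)) toM_sum.
apply/matrixP => i j; rewrite !mxE /DG_entry; apply: eq_bigr => mu _.
by rewrite AG.
Qed.

Lemma AtGt mu g : At mu *m Gt g = Gt g *m At mu.
Proof.
rewrite /At /Gt !toM_mul; apply/matrixP => i j; rewrite !mxE; set x := enum_val i; set y := enum_val j.
by rewrite AG GA.
Qed.

Lemma AtAt mu nu : At mu *m At nu = At nu *m At mu.
Proof.
case: (eqVneq mu nu) => [->|h] //.
rewrite /At !toM_mul; apply/matrixP => i j; rewrite !mxE; set x := enum_val i; set y := enum_val j.
rewrite AA // AA 1?eq_sym //.
have -> : [forall k, ((k != nu) && (k != mu)) ==> (val (x.1 k) == val (y.1 k))] =
  [forall k, ((k != mu) && (k != nu)) ==> (val (x.1 k) == val (y.1 k))].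
  by apply: eq_forallb => k; rewrite andbC.
by rewrite mulrC.
Qed.

Lemma GtM g h : Gt g *m Gt h = Gt (g *m h).
Proof.
rewrite /Gt toM_mul; apply/matrixP => i j; rewrite !mxE; set x := enum_val i; set y := enum_val j.
by rewrite GG.
Qed.

Lemma GtD g h : Gt (g + h) = Gt g + Gt h.
Proof.
apply/matrixP => i j; rewrite !mxE /Gl.
by case: ifP; rewrite ?addr0 // mxE.
Qed.

Lemma Gt_scalar c : Gt c%:M = c%:M.
Proof.
apply/matrixP => i j; rewrite !mxE /Gl -(inj_eq enum_val_inj).
case: (enum_val i) (enum_val j) => [v s] [w t] /=; rewrite xpair_eqE.
by case: eqP => //= _; rewrite mxE.
Qed.

Lemma Afun_anti mu x y : Afun mu y x = - Afun mu x y.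
Proof.
have ag : agree mu y.1 x.1 = agree mu x.1 y.1.
  by apply/forallP/forallP => h k; have := h k; case: (k != mu) => //=; rewrite eq_sym.
rewrite /Afun ag eq_sym; case: ifP => _; rewrite ?oppr0 //.
by rewrite !AlocE2 opprB.
Qed.

Lemma Afun_conj mu x y : (Afun mu x y)^* = Afun mu x y.
Proof.
rewrite /Afun; case: ifP => _; rewrite ?rmorph0 // AlocE2 rmorphB.
by case: ifP; case: ifP; rewrite ?rmorph0 ?rmorph1.
Qed.

Lemma pos_ker (u : 'rV[C]_(#|{: T}|)) :
  u *m \sum_mu (At mu *m At mu) = 0 -> forall mu, u *m At mu = 0.
Proof.
move=> hu.
have hT mu : (At mu)^T = - At mu by apply/matrixP => i j; rewrite !mxE Afun_anti.
have hc mu : map_mx (@Num.conj C) (At mu) = At mu by apply/matrixP => i j; rewrite !mxE Afun_conj.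
have key : \sum_mu (u *m At mu) *m (map_mx (@Num.conj C) (u *m At mu))^T = 0.
  have : u *m (\sum_mu At mu *m At mu) *m (map_mx (@Num.conj C) u)^T = 0 by rewrite hu mul0mx.
  rewrite mulmx_sumr mulmx_suml => H; apply/eqP; rewrite -oppr_eq0 -sumrN; apply/eqP; rewrite -[RHS]H.
  apply: eq_bigr => mu _.
  by rewrite map_mxM hc trmx_mul hT mulNmx mulmxN !mulmxA ?opprK.
move/matrixP: key => /(_ 0 0); rewrite summxE mxE => key.
have hge : forall mu, (true : bool) ->
   0 <= ((u *m At mu) *m (map_mx (@Num.conj C) (u *m At mu))^T) 0 0.
  move=> mu _; rewrite mxE; apply: sumr_ge0 => j _; rewrite !mxE; exact: mul_conjC_ge0.
move=> mu; have h0 := psumr_eq0P hge key (i := mu) isT.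
have h0' : \sum_j ((u *m At mu) 0 j * ((u *m At mu) 0 j)^* ) = 0.
  by rewrite -[RHS]h0 mxE; apply: eq_bigr => j _; rewrite !mxE.
have h1 := psumr_eq0P (fun j _ => mul_conjC_ge0 _) h0'.
apply/matrixP => i j; rewrite (ord1 i) [RHS]mxE; apply/eqP.
by rewrite -mul_conjC_eq0; apply/eqP; apply: h1.
Qed.

Section WithGam.
Hypothesis hgam : forall mu nu,
  gam mu *m gam nu + gam nu *m gam mu = ((mu == nu)%:R *+ 2)%:M.

Lemma DG2 : DG n cyc gam *m DG n cyc gam = \sum_mu At mu *m At mu.
Proof.
rewrite DG_decomp mulmx_suml.
set S := \sum_mu \sum_nu (At mu *m At nu) *m (Gt (gam mu) *m Gt (gam nu)).
have -> : \sum_mu At mu *m Gt (gam mu) *m \sum_nu At nu *m Gt (gam nu) = S.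
  apply: eq_bigr => mu _; rewrite mulmx_sumr; apply: eq_bigr => nu _.
  rewrite [LHS]mulmxA -[X in X *m Gt (gam nu)](mulmxA (At mu)) -AtGt.
  by rewrite !mulmxA.
have hGG mu nu : Gt (gam mu) *m Gt (gam nu) + Gt (gam nu) *m Gt (gam mu) =
    ((mu == nu)%:R *+ 2)%:M.
  by rewrite !GtM -GtD hgam Gt_scalar.
have hb (X : 'M[C]_(#|{: T}|)) (b : bool) : X *m ((b%:R *+ 2)%:M) = if b then X *+ 2 else 0.
  by case: b; rewrite mul_mx_scalar ?mulr0n ?mul0rn ?scale0r // mulr1n scaler_nat.
have hSS : S *+ 2 = (\sum_mu At mu *m At mu) *+ 2.
  rewrite mulr2n.
  have {2}-> : S = \sum_mu \sum_nu (At mu *m At nu) *m (Gt (gam nu) *m Gt (gam mu)).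
    rewrite /S exchange_big; apply: eq_bigr => mu _; apply: eq_bigr => nu _.
    by rewrite AtAt.
  rewrite -big_split -sumrMnl; apply: eq_bigr => mu _ /=.
  rewrite -big_split /=.
  under eq_bigr => nu _ do rewrite -mulmxDr hGG hb.
  rewrite (bigD1 mu) //= eqxx big1 ?addr0 // => nu hne.
  by rewrite eq_sym (negbTE hne).
move: hSS; rewrite -!scaler_nat => /(congr1 (fun M => (2%:R : C)^-1 *: M)).
by rewrite !scalerA mulVf ?scale1r // pnatr_eq0.
Qed.

Definition uf (u : 'rV[C]_(#|{: T}|)) (x : T) : C := u 0 (enum_rank x).

Lemma ker_fun (u : 'rV[C]_(#|{: T}|)) : u *m DG n cyc gam = 0 ->
  forall mu y, \sum_x uf u x * Afun mu x y = 0.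
Proof.
move=> h mu y.
have h1 : u *m \sum_mu (At mu *m At mu) = 0 by rewrite -DG2 mulmxA h mul0mx.
have := pos_ker _ h1 mu => /matrixP /(_ 0 (enum_rank y)); rewrite !mxE -sumT => h2.
rewrite -[RHS]h2; apply: eq_bigr => i _.
by rewrite /uf enum_valK !mxE enum_rankK.
Qed.

End WithGam.

Definition Bset : {set {ffun 'I_D -> bool}} := [set b : {ffun 'I_D -> bool} | [forall mu, b mu ==> cyc mu]].
Definition Aset := setX Bset [set: 'I_r].

Lemma cls_in x : valid x -> cls x \in Aset.
Proof.
move=> hv; rewrite !inE /= andbT; apply/forallP => mu.
by move/forallP: hv => /(_ mu); case: (cyc mu); case: (par x.1 mu).
Qed.

Lemma rep_valid a : a \in Aset -> valid (rep' a).
Proof.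
case: a => b s; rewrite !inE /= => /andP [/forallP hb _]; apply/forallP => mu.
by rewrite /rep' /= par_repb; have := hb mu; case: (b mu); case: (cyc mu).
Qed.

Lemma cls_rep a : cls (rep' a) = a.
Proof. by case: a => b s; rewrite /cls /rep' /= par_repb. Qed.

Definition Emx : 'M[C]_(#|Aset|, #|{: T}|) := \matrix_(i, j) e (enum_val i) (enum_val j).
Definition Fmx : 'M[C]_(#|{: T}|, #|Aset|) :=
  \matrix_(j, i) (if enum_val j == rep' (enum_val i) then 1 else 0).

Lemma EF : Emx *m Fmx = 1%:M.
Proof.
apply/matrixP => i i'; rewrite !mxE.
transitivity (\sum_x e (enum_val i) x * (if x == rep' (enum_val i') then 1 else 0)).
  by rewrite -sumT; apply: eq_bigr => j _; rewrite !mxE.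
rewrite (bigD1 (rep' (enum_val i'))) //= eqxx mulr1 big1 ?addr0; last first.
  by move=> x /negbTE ->; rewrite mulr0.
rewrite /e rep_valid ?enum_valP //= cls_rep (inj_eq enum_val_inj) eq_sym.
by case: eqP.
Qed.

Lemma E_DG : Emx *m DG n cyc gam = 0.
Proof.
rewrite DG_decomp mulmx_sumr big1 // => mu _.
rewrite mulmxA.
have -> : Emx *m At mu = 0.
  apply/matrixP => i j; rewrite !mxE -[RHS](E_ker (enum_val i) mu (enum_val j)) -sumT.
  by apply: eq_bigr => k _; rewrite !mxE.
by rewrite mul0mx.
Qed.

Lemma rank_E : \rank Emx = #|Aset|.
Proof. by apply/eqP; apply/row_freeP; exists Fmx; exact: EF. Qed.

Section WithGam2.
Hypothesis hgam : forall mu nu,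
  gam mu *m gam nu + gam nu *m gam mu = ((mu == nu)%:R *+ 2)%:M.

Lemma ker_E (u : 'rV[C]_(#|{: T}|)) : u *m DG n cyc gam = 0 -> u = (u *m Fmx) *m Emx.
Proof.
move=> h; have hc := ker_char (uf u) (ker_fun hgam _ h).
have hF i' : (u *m Fmx) 0 i' = uf u (rep' (enum_val i')).
  rewrite mxE; transitivity (\sum_x uf u x * (if x == rep' (enum_val i') then 1 else 0)).
    by rewrite -sumT; apply: eq_bigr => k _; rewrite /uf enum_valK mxE.
  rewrite (bigD1 (rep' (enum_val i'))) //= eqxx mulr1 big1 ?addr0 //.
  by move=> x /negbTE ->; rewrite mulr0.
apply/matrixP => i j; rewrite (ord1 i) [RHS]mxE.
transitivity (uf u (enum_val j)); first by rewrite /uf enum_valK.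
set x := enum_val j.
transitivity (\sum_(a in Aset) uf u (rep' a) * e a x); last first.
  by rewrite big_enum_val; apply: eq_bigr => i' _; rewrite hF mxE.
rewrite hc; case: (boolP (valid x)) => hv.
  rewrite (bigD1 (cls x)) ?cls_in //= /e hv eqxx mulr1 big1 ?addr0 //.
  by move=> a /andP [_ hne]; rewrite /e /= eq_sym (negbTE hne) mulr0.
by rewrite big1 // => a _; rewrite /e (negbTE hv) mulr0.
Qed.

Lemma ker_rank : (#|{: T}| - \rank (DG n cyc gam))%N = #|Aset|.
Proof.
rewrite -mxrank_ker -rank_E.
have s1 : (Emx <= kermx (DG n cyc gam))%MS by apply/sub_kermxP; exact: E_DG.
have s2 : (kermx (DG n cyc gam) <= Emx)%MS.
  have hK := mulmx_ker (DG n cyc gam).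
  move: (kermx (DG n cyc gam)) hK => K hK.
  apply/submxP; exists (K *m Fmx).
  apply/row_matrixP => i; rewrite !row_mul; apply: ker_E.
  by rewrite -row_mul hK row0.
by apply/eqP; rewrite eqn_leq !mxrankS.
Qed.

End WithGam2.

Lemma num_edgesE mu : num_edges (factor_edge (cyc mu) (n mu)) =
  if cyc mu then n mu else (n mu).-1.
Proof.
rewrite /num_edges.
have -> : #|[set p : 'I_(n mu) * 'I_(n mu) | factor_edge (cyc mu) (n mu) p.1 p.2]| =
    (\sum_(i : 'I_(n mu)) \sum_(j : 'I_(n mu)) (factor_edge (cyc mu) (n mu) i j : nat))%N.
  rewrite -sum1_card pair_big big_mkcond /=; apply: eq_bigr => [[i j]] _.
  by rewrite inE /=; case: (factor_edge _ _ _ _).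
under eq_bigr => i _ do under eq_bigr => j _ do rewrite edgeE.
under eq_bigr => i _ do rewrite sum_pickn.
rewrite /sc; case: (cyc mu).
  under eq_bigr => i _ do rewrite ltn_pmod ?n_gt0 //.
  by rewrite sum1_ordn.
by rewrite sum_pathn.
Qed.

Lemma beta0E mu : beta0 (factor_edge (cyc mu) (n mu)) = 1%N.
Proof.
rewrite /beta0.
set e := fun x y => _.
have sym : connect_sym e by apply: sym_connect_sym => x y; rewrite /e orbC.
pose x0 := Ordinal (n_gt0 mu).
have hall : forall y, connect e x0 y.
  suff H : forall k (hk : (k < n mu)%N), connect e x0 (Ordinal hk).
    by case=> k hk; apply: H.
  elim => [|k IH] hk; first by have -> : Ordinal hk = x0 by apply: val_inj.
  apply: connect_trans (IH (ltnW hk)) _; apply: connect1.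
  rewrite /e edgeE /sc /=; case: (cyc mu) => /=; last by rewrite eqxx.
  by rewrite modn_small ?eqxx.
transitivity (n_comp e (connect e x0)); last exact: n_comp_connect sym x0.
apply: eq_n_comp_r => y.
by apply/idP/idP => _; [apply: hall | ].
Qed.

Lemma beta_sum mu : (beta0 (factor_edge (cyc mu) (n mu)) + beta1 (factor_edge (cyc mu) (n mu)))%N =
  if cyc mu then 2%N else 1%N.
Proof.
rewrite /beta1 beta0E num_edgesE; have := n_ge2 mu.
by case: (cyc mu) => h; lia.
Qed.

End Main.

Theorem theorem5 (R : rcfType) (D : nat) (n : 'I_D -> nat) (cyc : 'I_D -> bool)
  (r : nat) (gam : 'I_D -> 'M[R[i]]_r) :
  (1 <= D)%N ->
  (forall mu, cyc mu -> (3 <= n mu)%N /\ ~~ odd (n mu)) ->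
  (forall mu, ~~ cyc mu -> (2 <= n mu)%N /\ odd (n mu)) ->
  (forall mu nu, gam mu *m gam nu + gam nu *m gam mu = ((mu == nu)%:R *+ 2)%:M) ->
  let d := #|[set mu | cyc mu]| in
  ((\prod_(mu < D) n mu) * r - \rank (DG n cyc gam)
     = r * \prod_(mu < D) (beta0 (factor_edge (cyc mu) (n mu))
                          + beta1 (factor_edge (cyc mu) (n mu))))%N
  /\ (r * \prod_(mu < D) (beta0 (factor_edge (cyc mu) (n mu))
                          + beta1 (factor_edge (cyc mu) (n mu))) = r * 2 ^ d)%N.
Proof.
move=> _ Hc Hp Hg d.
have hprod : (\prod_(mu < D) (beta0 (factor_edge (cyc mu) (n mu))
      + beta1 (factor_edge (cyc mu) (n mu))) = 2 ^ d)%N.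
  by rewrite (eq_bigr _ (fun mu _ => beta_sum _ _ _ Hc Hp mu)) prodif.
split; last by rewrite hprod.
rewrite hprod -cardT_test (ker_rank _ _ _ _ _ _ Hc Hp Hg) /Aset cardsX cardsT card_ord cardB.
by rewrite mulnC.
Qed.
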